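(* Let $A\in\{0,1\}^{N\times n}$ and, for unit vectors $U_1,\dots,U_N,V_1,\dots,V_n\in\mathbb{R}^d$, $t>0$ and $b\in\mathbb{R}$, define $$\mathcal{L}(\{U_j\},\{V_i\};t,b)=\sum_{j\in[N],\,i\in[n]}\log\Bigl(1+\exp\bigl((-1)^{A_{ji}}(t\langle U_j,V_i\rangle-b)\bigr)\Bigr).$$ (1) If $\mathcal{L}(\{U_j\},\{V_i\};t,b)<\log 2$, then there exists $m>0$ such that $\{U_j\},\{V_i\}$ is a margin-$m$, relative-bias-$\frac bt$ embedding of $A$. (2) If $\{U_j\},\{V_i\}$ is a margin-$m_*$, relative-bias-$\tau$ embedding of $A$, where $$m_*:=\min\Bigl\{\min_{A_{ji}=1}(\langle U_j,V_i\rangle-\tau),\ \min_{A_{ji}=0}(\tau-\langle U_j,V_i\rangle)\Bigr\}>0,$$ then $\lim_{T\to\infty}\frac1T\log\mathcal{L}(\{U_j\},\{V_i\};T,T\tau)=-m_*$.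
   Context: For $A\in\{0,1\}^{N\times n}$, $m\ge0$ and $\tau\in\mathbb{R}$, unit vectors $U_1,\dots,U_N,V_1,\dots,V_n\in\mathbb{R}^d$ form a margin-$m$, relative-bias-$\tau$ embedding of $A$ if $\langle U_j,V_i\rangle\ge\tau+m$ whenever $A_{ji}=1$ and $\langle U_j,V_i\rangle\le\tau-m$ whenever $A_{ji}=0$. *)

(* Defs.v *)
From HB Require Import structures.
From mathcomp Require Import all_boot all_order all_algebra.
From mathcomp Require Import all_classical all_reals all_analysis.
Set Implicit Arguments. Unset Strict Implicit. Unset Printing Implicit Defensive.
Import Order.TTheory GRing.Theory Num.Theory.
Import numFieldNormedType.Exports.
Local Open Scope ring_scope.

Section Defs.
Variable R : realType.

Definition dotp (d : nat) (u v : 'rV[R]_d) : R := \sum_(k < d) u 0 k * v 0 k.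

Definition unit_vec (d : nat) (u : 'rV[R]_d) : Prop := dotp u u = 1.

(* margin-m, relative-bias-tau embedding of A (A j i = true means A_{ji} = 1) *)
Definition embedding (N n d : nat) (A : 'M[bool]_(N, n))
  (U : 'I_N -> 'rV[R]_d) (V : 'I_n -> 'rV[R]_d) (m tau : R) : Prop :=
  forall (j : 'I_N) (i : 'I_n),
    (A j i -> tau + m <= dotp (U j) (V i)) /\
    (~~ A j i -> dotp (U j) (V i) <= tau - m).

Definition loss (N n d : nat) (A : 'M[bool]_(N, n))
  (U : 'I_N -> 'rV[R]_d) (V : 'I_n -> 'rV[R]_d) (t b : R) : R :=
  \sum_(j < N) \sum_(i < n)
     ln (1 + expR ((-1) ^+ (A j i : nat) * (t * dotp (U j) (V i) - b))).

(* m_* = min { min_{A_ji=1} (<U_j,V_i> - tau), min_{A_ji=0} (tau - <U_j,V_i>) },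
   computed in the extended reals (a min over an empty index set is +oo). *)
Definition mstar (N n d : nat) (A : 'M[bool]_(N, n))
  (U : 'I_N -> 'rV[R]_d) (V : 'I_n -> 'rV[R]_d) (tau : R) : \bar R :=
  Order.min
    (\big[Order.min/+oo%E]_(j < N) \big[Order.min/+oo%E]_(i < n | A j i)
        (dotp (U j) (V i) - tau)%:E)
    (\big[Order.min/+oo%E]_(j < N) \big[Order.min/+oo%E]_(i < n | ~~ A j i)
        (tau - dotp (U j) (V i))%:E).

End Defs.

(* Main.v *)
Require Import Defs.
From HB Require Import structures.
From mathcomp Require Import all_boot all_order all_algebra.
From mathcomp Require Import all_classical all_reals all_analysis.
From mathcomp Require Import ring lra.
Import Order.TTheory GRing.Theory Num.Theory.
Import numFieldNormedType.Exports.
Local Open Scope classical_set_scope.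
Local Open Scope ring_scope.

Section Helpers.
Variable R : realType.

Lemma ln1p_lb (y : R) : 0 < y -> y <= 1 -> y / 2 <= ln (1 + y).
Proof.
move=> y0 y1.
have hy1 : 0 < 1 + y by lra.
have h1 : -1 < - (y / (1 + y)).
  rewrite ltrN2 ltr_pdivrMr //; lra.
have := le_ln1Dx h1.
rewrite (_ : 1 + - (y / (1 + y)) = (1 + y)^-1); last by field; lra.
rewrite lnV ?posrE // lerN2 => h.
apply: le_trans h.
rewrite ler_pM2l // lef_pV2 ?posrE //; lra.
Qed.

Lemma pos_lb (I : finType) (f : I -> R) :
  (forall i, 0 < f i) -> exists m, 0 < m /\ forall i, m <= f i.
Proof.
move=> hf; exists (\big[Order.min/1]_i f i); split.
- by elim/big_ind: _ => // x y hx hy; rewrite lt_min hx hy.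
- by move=> i; exact: bigmin_le.
Qed.

Lemma bigmin_ex (I : finType) (P : pred I) (F : I -> \bar R) :
  \big[Order.min/+oo%E]_(i | P i) F i = +oo%E \/
  exists2 i, P i & \big[Order.min/+oo%E]_(i | P i) F i = F i.
Proof.
apply: (big_rec (fun x => x = +oo%E \/ exists2 k, P k & x = F k)); first by left.
move=> i x Pi [->|[k Pk ->]].
- right; exists i => //; rewrite min_l //; exact: leey.
- right; case: (leP (F i) (F k)) => h.
  + by exists i => //; rewrite min_l.
  + by exists k => //; rewrite min_r // ltW.
Qed.

Lemma sum2_ge (N n : nat) (F : 'I_N -> 'I_n -> R) j0 i0 :
  (forall j i, 0 <= F j i) -> F j0 i0 <= \sum_j \sum_i F j i.
Proof.
move=> hF; rewrite (bigD1 j0) //= (bigD1 i0) //= -addrA lerDl.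
by rewrite addr_ge0 // sumr_ge0 // => j _; rewrite sumr_ge0.
Qed.


Lemma part1 (N n d : nat) (A : 'M[bool]_(N, n))
  (U : 'I_N -> 'rV[R]_d) (V : 'I_n -> 'rV[R]_d) (t b : R) :
  0 < t -> loss A U V t b < ln 2 -> exists m : R, 0 < m /\ embedding A U V m (b / t).
Proof.
move=> t0 hL.
have hterm : forall j i, (-1) ^+ (A j i : nat) * (t * dotp (U j) (V i) - b) < 0.
  move=> j i.
  have hle := @sum2_ge N n (fun (j : 'I_N) (i : 'I_n) => ln (1 + expR ((-1) ^+ (A j i : nat) * (t * dotp (U j) (V i) - b)))) j i.
  have hnn : forall (j : 'I_N) (i : 'I_n), 0 <= ln (1 + expR ((-1) ^+ (A j i : nat) * (t * dotp (U j) (V i) - b))).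
    by move=> j' i'; rewrite ln_ge0 // lerDl expR_ge0.
  have := le_lt_trans (hle hnn) hL.
  have hp : 0 < 1 + expR ((-1) ^+ (A j i : nat) * (t * dotp (U j) (V i) - b)).
    by rewrite ltr_pwDr ?expR_gt0.
  rewrite ltr_ln ?posrE // => h; rewrite -expR_lt1; lra.
pose f (p : 'I_N * 'I_n) := if A p.1 p.2 then dotp (U p.1) (V p.2) - b / t
                           else b / t - dotp (U p.1) (V p.2).
have fpos : forall p, 0 < f p.
  case=> j i; rewrite /f /=; have := hterm j i.
  case: (A j i) => /=; rewrite ?expr1 ?expr0 ?mul1r ?mulN1r => h.
  - by rewrite subr_gt0 ltr_pdivrMr // mulrC; lra.
  - by rewrite subr_gt0 ltr_pdivlMr // mulrC; lra.
have [m [m0 hm]] := @pos_lb _ f fpos.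
exists m; split => // j i; have := hm (j, i); rewrite /f /=.
by case: (A j i) => /= h; split => // _; lra.
Qed.


Lemma bigmin2_ex (N n : nat) (P : 'I_N -> 'I_n -> bool) (F : 'I_N -> 'I_n -> \bar R) :
  \big[Order.min/+oo%E]_(j < N) \big[Order.min/+oo%E]_(i < n | P j i) F j i = +oo%E \/
  exists j i, P j i /\
  \big[Order.min/+oo%E]_(j < N) \big[Order.min/+oo%E]_(i < n | P j i) F j i = F j i.
Proof.
have [->|[j _ ->]] := @bigmin_ex _ xpredT
  (fun j => \big[Order.min/+oo%E]_(i < n | P j i) F j i); first by left.
have [->|[i Pi ->]] := @bigmin_ex _ (P j) (F j); first by left.
by right; exists j, i.
Qed.

Lemma min_or (x y : \bar R) : Order.min x y = x \/ Order.min x y = y.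
Proof. by case: (leP x y) => h; [left | right]. Qed.

Lemma mstar_attained (N n d : nat) (A : 'M[bool]_(N, n))
  (U : 'I_N -> 'rV[R]_d) (V : 'I_n -> 'rV[R]_d) (tau : R) :
  (0 < N)%N -> (0 < n)%N -> (0 < mstar A U V tau)%E ->
  (mstar A U V tau < +oo)%E /\
  exists j i, (-1) ^+ (A j i : nat) * (dotp (U j) (V i) - tau) = - fine (mstar A U V tau).
Proof.
move=> hN hn hpos.
pose j0 : 'I_N := Ordinal hN; pose i0 : 'I_n := Ordinal hn.
have fin : (mstar A U V tau < +oo)%E.
  rewrite /mstar; case hA: (A j0 i0).
  - apply: (@le_lt_trans _ _ ((dotp (U j0) (V i0) - tau)%:E)); last exact: ltry.
    rewrite ge_min; apply/orP; left.
    apply: le_trans; first exact: (bigmin_le _ j0).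
    by apply: bigmin_le_cond; rewrite hA.
  - apply: (@le_lt_trans _ _ ((tau - dotp (U j0) (V i0))%:E)); last exact: ltry.
    rewrite ge_min; apply/orP; right.
    apply: le_trans; first exact: (bigmin_le _ j0).
    by apply: bigmin_le_cond; rewrite hA.
split => //; move: fin; rewrite /mstar.
case: (min_or
  (\big[Order.min/+oo%E]_(j < N) \big[Order.min/+oo%E]_(i < n | A j i)
        (dotp (U j) (V i) - tau)%:E)
  (\big[Order.min/+oo%E]_(j < N) \big[Order.min/+oo%E]_(i < n | ~~ A j i)
        (tau - dotp (U j) (V i))%:E)) => ->.
- have [->|[j [i [Pi ->]]]] := @bigmin2_ex N n (fun (j : 'I_N) (i : 'I_n) => A j i)
     (fun (j : 'I_N) (i : 'I_n) => (dotp (U j) (V i) - tau)%:E); first by rewrite ltxx.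
  by move=> _; exists j, i; rewrite Pi /= expr1 mulN1r.
- have [->|[j [i [Pi ->]]]] := @bigmin2_ex N n (fun (j : 'I_N) (i : 'I_n) => ~~ A j i)
     (fun (j : 'I_N) (i : 'I_n) => (tau - dotp (U j) (V i))%:E); first by rewrite ltxx.
  by move=> _; exists j, i; move: Pi; rewrite /= => /negbTE -> /=; rewrite expr0 mul1r opprB.
Qed.


Lemma part2 (N n d : nat) (A : 'M[bool]_(N, n))
  (U : 'I_N -> 'rV[R]_d) (V : 'I_n -> 'rV[R]_d) (tau : R) :
  (0 < N)%N -> (0 < n)%N -> (0 < mstar A U V tau)%E ->
  embedding A U V (fine (mstar A U V tau)) tau ->
  ln (loss A U V T (T * tau)) / T @[T --> +oo%R] --> - fine (mstar A U V tau).
Proof.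
move=> hN hn hpos hemb.
have [fin [j0 [i0 hs0]]] := @mstar_attained N n d A U V tau hN hn hpos.
move: hs0 hemb; set m := fine (mstar A U V tau) => hs0 hemb.
have m0 : 0 < m.
  by rewrite /m fine_gt0 // hpos fin.
pose s (j : 'I_N) (i : 'I_n) := (-1) ^+ (A j i : nat) * (dotp (U j) (V i) - tau).
have hs : forall j i, s j i <= - m.
  move=> j i; rewrite /s; move: (hemb j i); case: (A j i) => /=; rewrite ?expr1 ?expr0 => -[h1 h2].
  - have := h1 isT; lra.
  - have := h2 isT; lra.
have hL : forall T, loss A U V T (T * tau) = \sum_j \sum_i ln (1 + expR (T * s j i)).
  move=> T; apply: eq_bigr => j _; apply: eq_bigr => i _; rewrite /s.
  congr (ln (1 + expR _)); ring.
pose K : R := (N * n)%:R.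
have K1 : 1 <= K by rewrite /K ler1n muln_gt0 hN hn.
pose c := ln 2 + ln K.
have c0 : 0 <= c by rewrite addr_ge0 // ln_ge0 // ler1n.
have bnd : forall T, 0 < T ->
    T * - m - ln 2 <= ln (loss A U V T (T * tau)) <= ln K + T * - m.
  move=> T T0; set e := expR (T * - m).
  have e0 : 0 < e by rewrite expR_gt0.
  have e1 : e <= 1 by rewrite expR_le1; nra.
  have up : loss A U V T (T * tau) <= K * e.
    rewrite hL; apply: (@le_trans _ _ (\sum_(j < N) \sum_(i < n) e)).
      apply: ler_sum => j _; apply: ler_sum => i _.
      apply: le_trans (le_ln1Dx _) _; first by have := expR_gt0 (T * s j i); lra.
      by rewrite ler_expR ler_pM2l.
    by rewrite !sumr_const !card_ord -mulrnA mulr_natl mulnC.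
  have lo : e / 2 <= loss A U V T (T * tau).
    rewrite hL; apply: le_trans (@sum2_ge N n (fun j i => ln (1 + expR (T * s j i))) j0 i0 _).
      by rewrite /= /s hs0; exact: ln1p_lb.
    by move=> j i; rewrite ln_ge0 // lerDl expR_ge0.
  have L0 : 0 < loss A U V T (T * tau) by apply: lt_le_trans lo; rewrite divr_gt0.
  apply/andP; split.
  - have : ln (e / 2) <= ln (loss A U V T (T * tau)) by rewrite ler_ln ?posrE ?divr_gt0.
    by rewrite ln_div ?posrE // expRK.
  - have : ln (loss A U V T (T * tau)) <= ln (K * e).
      by rewrite ler_ln ?posrE ?mulr_gt0 //; apply: lt_le_trans K1.
    by rewrite lnM ?posrE // ?expRK //; apply: lt_le_trans K1.
apply/cvgrPdist_le => eps eps0.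
near=> T.
have T0 : 0 < T by near: T; exact: nbhs_pinfty_gt.
have Tc : c / eps < T by near: T; apply: nbhs_pinfty_gt; rewrite num_real.
have cT : c <= eps * T by rewrite ltr_pdivrMr // in Tc; nra.
have := bnd T T0; set X := ln (loss A U V T (T * tau)) => /andP[b1 b2].
have ln20 : 0 <= ln (2 : R) by rewrite ln_ge0 // ler1n.
have lnK0 : 0 <= ln K by rewrite ln_ge0.
set Y := X * T^-1.
have XY : X = Y * T by rewrite /Y -mulrA mulVf ?mulr1 // gt_eqF.
rewrite XY in b1 b2.
have cE : c = ln 2 + ln K by [].
clearbody Y X c; rewrite ler_norml; apply/andP; split; nra.
Unshelve. all: end_near.
Qed.

End Helpers.

Theorem propositionG4 (R : realType) (N n d : nat) (A : 'M[bool]_(N, n))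
  (U : 'I_N -> 'rV[R]_d) (V : 'I_n -> 'rV[R]_d) :
  (0 < N)%N -> (0 < n)%N ->
  (forall j, unit_vec (U j)) -> (forall i, unit_vec (V i)) ->
  (forall t b : R, 0 < t -> loss A U V t b < ln 2 ->
     exists m : R, 0 < m /\ embedding A U V m (b / t)) /\
  (forall tau : R, (0 < mstar A U V tau)%E ->
     embedding A U V (fine (mstar A U V tau)) tau ->
     ln (loss A U V T (T * tau)) / T @[T --> +oo%R]
       --> - fine (mstar A U V tau)).
Proof.
move=> hN hn _ _; split.
- by move=> t b t0 hL; exact: part1.
- by move=> tau hpos hemb; exact: part2.
Qed.
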